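(* Let $G$ be a connected edge-stable equimatchable graph with at least $3$ vertices and let $M$ be a maximal matching of $G$. Then (i) $G$ has no perfect matching; and (ii) for every edge $uv\in M$ there exists a vertex $w$ not saturated by $M$ which is adjacent to $u$ or to $v$.
   Context: All graphs are finite and simple. A graph is equimatchable if all its maximal matchings have the same cardinality; an equimatchable graph $G$ is edge-stable if $G\setminus e$ (delete edge $e$, keep vertices) is equimatchable for every $e\in E(G)$. A matching saturates a vertex if the vertex is an endpoint of one of its edges. *)

(* Defs.v *)
From mathcomp Require Import all_boot.
Set Implicit Arguments. Unset Strict Implicit. Unset Printing Implicit Defensive.

Definition simple_graph (T : finType) (g : rel T) : Prop :=
  symmetric g /\ irreflexive g.

Definition is_edge (T : finType) (g : rel T) (e : {set T}) : Prop :=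
  exists x y, g x y /\ e = [set x; y].

Definition matching (T : finType) (g : rel T) (M : {set {set T}}) : Prop :=
  (forall e, e \in M -> is_edge g e) /\
  (forall e f, e \in M -> f \in M -> e != f -> [disjoint e & f]).

Definition maximal_matching (T : finType) (g : rel T) (M : {set {set T}}) : Prop :=
  matching g M /\ (forall M', matching g M' -> M \subset M' -> M' = M).

Definition equimatchable (T : finType) (g : rel T) : Prop :=
  forall M1 M2, maximal_matching g M1 -> maximal_matching g M2 -> #|M1| = #|M2|.

Definition delete_edge (T : finType) (g : rel T) (e : {set T}) : rel T :=
  fun x y => g x y && ([set x; y] != e).

Definition edge_stable (T : finType) (g : rel T) : Prop :=
  equimatchable g /\ (forall e, is_edge g e -> equimatchable (delete_edge g e)).

Definition connected_graph (T : finType) (g : rel T) : Prop :=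
  forall x y : T, connect g x y.

Definition saturates (T : finType) (M : {set {set T}}) (v : T) : Prop :=
  exists2 e, e \in M & v \in e.

Definition perfect_matching (T : finType) (g : rel T) (M : {set {set T}}) : Prop :=
  matching g M /\ forall v : T, saturates M v.

(* Main.v *)
Require Import Defs.
From mathcomp Require Import all_boot.
From Stdlib Require Import Classical.
Set Implicit Arguments. Unset Strict Implicit. Unset Printing Implicit Defensive.

Section S.
Variables (T : finType) (g : rel T).

Lemma ext_max (N : {set {set T}}) : matching g N ->
  exists M', maximal_matching g M' /\ N \subset M'.
Proof.
move: {2}#|~: N| (leqnn #|~: N|) => k; elim: k N => [|k IH] N Hk HN.
  exists N; split=> //; split=> // M' HM' sub.
  apply/eqP; rewrite eq_sym eqEsubset sub /=.
  apply/subsetP=> x _; move: Hk; rewrite leqn0 cards_eq0 => /eqP /setP /(_ x).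
  by rewrite in_setC in_set0 => /negbFE.
case: (classic (maximal_matching g N)) => [Hm|Hm]; first by exists N.
have [M' [HM' [sub ne]]] : exists M', matching g M' /\ N \subset M' /\ M' <> N.
  apply: NNPP => C; apply: Hm; split=> // M' HM' sub.
  by apply: NNPP => ne; apply: C; exists M'.
have pr : N \proper M' by rewrite properEneq sub andbT eq_sym; apply/eqP.
have Hk' : #|~: M'| <= k.
  rewrite -ltnS; apply: leq_trans Hk; apply: proper_card; by rewrite properC.
have [M'' [HM'' sub']] := IH M' Hk' HM'.
by exists M''; split=> //; apply: subset_trans sub'.
Qed.

Lemma edge_form f : is_edge g f -> exists p q, g p q /\ f = [set p; q].
Proof. by case=> p [q [H ->]]; exists p, q. Qed.

Lemma boundary (S : {set T}) a z : a \in S -> z \notin S -> connect g a z ->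
  exists a' x, [/\ a' \in S, x \notin S & g a' x].
Proof.
move=> aS zS /connectP [p]; elim: p a aS => [|y p IH] a aS /=.
  by move=> _ zE; rewrite zE aS in zS.
case/andP=> gay py zE; case: (boolP (y \in S)) => yS.
  exact: IH yS py zE.
by exists a, y.
Qed.

Lemma pair_eq (p q a b : T) : p != q -> p \in [set a; b] -> q \in [set a; b] ->
  [set p; q] = [set a; b].
Proof.
move=> + pa qa; move: pa qa; rewrite !inE => /orP[]/eqP-> /orP[]/eqP->; rewrite ?eqxx //.
by rewrite setUC.
Qed.

Lemma Mminus (M : {set {set T}}) (a b : T) :
  simple_graph g -> maximal_matching g M -> [set a; b] \in M ->
  (forall p q, p \in [set a; b] -> g p q -> q \notin [set a; b] -> saturates M q) ->
  maximal_matching (delete_edge g [set a; b]) (M :\ [set a; b]).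
Proof.
set e := [set a; b].
move=> [gsym girr] [[HMe HMd] Hmax] eM Hsat.
have mat : matching (delete_edge g e) (M :\ e).
  split.
    move=> f; rewrite in_setD1 => /andP[fne fM].
    have [p [q [gpq fE]]] := edge_form (HMe f fM).
    exists p, q; split=> //; rewrite /delete_edge gpq /= -fE //.
  move=> f h; rewrite !in_setD1 => /andP[_ fM] /andP[_ hM]; exact: HMd.
split=> // M' [HM'e HM'd] sub.
apply/eqP; rewrite eqEsubset sub andbT; apply/subsetP => f fM'.
apply: contraT => fn; suff : False by [].
have [p [q [gpq fE]]] := HM'e f fM'.
move: gpq; rewrite /delete_edge => /andP[gpq pqe].
have dis : forall h, h \in M :\ e -> [disjoint f & h].
  move=> h hM; apply: HM'd => //; first exact: (subsetP sub).
  by apply: contraNneq fn => ->.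
have satc : forall y, y \in f -> y \notin e -> saturates M y -> False.
  move=> y yf ye [h hM yh].
  have hne : h != e by apply: contraNneq ye => <-.
  have := dis h; rewrite in_setD1 hne hM => /(_ isT) dfh.
  by rewrite (disjointFr dfh yf) in yh.
have pq : p != q by apply: contraTneq gpq => ->; rewrite girr.
case: (boolP (p \in e)) => pe; case: (boolP (q \in e)) => qe.
- by rewrite (pair_eq pq pe qe) eqxx in pqe.
- apply: (satc q _ qe); first by rewrite fE !inE eqxx orbT.
  exact: Hsat gpq qe.
- apply: (satc p _ pe); first by rewrite fE !inE eqxx.
  by apply: (Hsat q) => //; rewrite gsym.
have fnM : f \notin M.
  apply: contra fn => fM; rewrite in_setD1 fM andbT fE //.
have mat2 : matching g (f |: M).
  split.
    move=> h; rewrite in_setU1 => /orP[/eqP->|hM]; last exact: HMe.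
    by exists p, q.
  have dfh : forall h, h \in M -> [disjoint f & h].
    move=> h hM; case: (eqVneq h e) => [->|hne]; last by apply: dis; rewrite in_setD1 hne.
    rewrite fE disjoint_subset; apply/subsetP => y.
    move: pe qe; rewrite !inE => pe' qe' /orP[]/eqP-> //.
  move=> h k; rewrite !in_setU1 => /orP[/eqP->|hM] /orP[/eqP->|kM]; rewrite ?eqxx //.
  + by move=> _; exact: dfh.
  + by move=> _; rewrite disjoint_sym; exact: dfh.
  + exact: HMd.
have := Hmax _ mat2 (subsetUr _ _) => /setP /(_ f).
by rewrite in_setU1 eqxx /= (negbTE fnM).
Qed.

End S.

Lemma main (T : finType) (g : rel T) (M : {set {set T}}) (a b : T) :
  simple_graph g -> connected_graph g -> edge_stable g -> 3 <= #|T| ->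
  maximal_matching g M -> [set a; b] \in M ->
  exists w, ~ saturates M w /\ (g a w \/ g b w).
Proof.
set e := [set a; b].
move=> Hs Hc [Heq Hst] HT HM eM.
apply: NNPP => Hno.
have Hsat : forall p q, p \in e -> g p q -> q \notin e -> saturates M q.
  move=> p q pe gpq _; apply: NNPP => ns; apply: Hno; exists q; split=>//.
  by move: pe gpq; rewrite !inE => /orP[]/eqP->; auto.
have HMm := Mminus Hs HM eM Hsat.
have [z ze] : exists z, z \notin e.
  apply: NNPP => C.
  have sub : [set: T] \subset e.
    by apply/subsetP => y _; apply: NNPP => ye; apply: C; exists y; apply/negP.
  have := subset_leq_card sub; rewrite cardsT cards2 => H.
  by have := leq_trans HT H; case: (a != b).
have ae : a \in e by rewrite !inE eqxx.
have [a' [x [a'e xe ga'x]]] := boundary ae ze (Hc a z).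
set N := [set [set a'; x]].
have Nm : matching g N.
  split.
    by move=> f; rewrite inE => /eqP->; exists a', x.
  by move=> f h; rewrite !inE => /eqP-> /eqP->; rewrite eqxx.
have [M5 [HM5 sub5]] := ext_max Nm.
have c5 : #|M5| = #|M| := Heq _ _ HM5 HM.
have ax5 : [set a'; x] \in M5 by apply: (subsetP sub5); rewrite inE.
have eM5 : e \notin M5.
  apply/negP => eM5.
  have ne : e != [set a'; x].
    by apply: contraNneq xe => ->; rewrite !inE eqxx orbT.
  have := disjointFr (HM5.1.2 _ _ eM5 ax5 ne) a'e.
  by rewrite !inE eqxx.
have M5m : matching (delete_edge g e) M5.
  split; last exact: HM5.1.2.
  move=> f fM; have [p [q [gpq fE]]] := edge_form (HM5.1.1 f fM).
  exists p, q; split=> //; rewrite /delete_edge gpq -fE /=.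
  by apply: contraNneq eM5 => <-.
have [M6 [HM6 sub6]] := ext_max M5m.
have edge_e : is_edge g e by exact: HM.1.1 _ eM.
have H2 := Hst e edge_e _ _ HM6 HMm.
have := subset_leq_card sub6.
by rewrite c5 (cardsD1 e M) eM H2 add1n ltnn.
Qed.

Theorem corollary2p2 (T : finType) (g : rel T) (M : {set {set T}}) :
  simple_graph g -> connected_graph g -> edge_stable g -> 3 <= #|T| ->
  maximal_matching g M ->
  (~ exists P, perfect_matching g P) /\
  (forall u v : T, [set u; v] \in M ->
     exists w : T, ~ saturates M w /\ (g u w \/ g v w)).
Proof.
move=> Hs Hc Hst HT HM; split; last by move=> u v; apply: main.
case=> P [HP Hall].
have HPm : maximal_matching g P.
  split=> // M' HM' sub; apply/eqP; rewrite eqEsubset sub andbT.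
  apply/subsetP => f fM'.
  have [p [q [gpq fE]]] := edge_form (HM'.1 f fM').
  have [h hP ph] := Hall p.
  case: (eqVneq f h) => [->|fh] //.
  have := disjointFr (HM'.2 _ _ fM' (subsetP sub h hP) fh) (x := p).
  by rewrite fE !inE eqxx ph => /(_ isT).
have /card_gt0P [z _] : 0 < #|T| by apply: leq_trans HT.
have [h hP zh] := Hall z.
have [u [v [_ hE]]] := edge_form (HP.1 h hP).
rewrite hE in hP.
by have [w [nw _]] := main Hs Hc Hst HT HPm hP; apply: nw.
Qed.
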